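(* Let $(\Omega,\mathcal F)$ be a measurable space with $\Sigma\neq\emptyset$, $\nu$ a finite measure, and $\mu$ a finite measure with $\mu\ll\nu$. Let $F_\mu(y)=\nu(\{\omega:\frac{d\mu}{d\nu}(\omega)\le y\})$ ($y\ge0$), $F_\mu^{-1}(\beta)=\inf\{z\ge0: F_\mu(z)>\beta\}$ ($\beta\ge0$), and $v_\mu(A)=\int_0^\infty\min(\nu(\Omega)-F_\mu(z),\nu(A))\,dz$. Then $$v_\mu(A)=\int_{\nu(A^c)}^{\nu(\Omega)}F_\mu^{-1}(\beta)\,d\beta,\qquad A\in\mathcal F.$$
   Context: $\Sigma$ denotes the set of all classes $\mathcal I\subset\mathcal F$ that are chains (totally ordered by inclusion), contain $\emptyset$ and $\Omega$, and generate $\mathcal F$ as a $\sigma$-algebra. $\frac{d\mu}{d\nu}$ is the non-negative Radon–Nikodym derivative. *)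

(* Defs.v *)
From HB Require Import structures.
From mathcomp Require Import all_boot all_order all_algebra.
From mathcomp Require Import all_classical all_reals all_analysis.
Set Implicit Arguments. Unset Strict Implicit. Unset Printing Implicit Defensive.
Import Order.TTheory GRing.Theory Num.Theory.
Import numFieldNormedType.Exports.
Local Open Scope classical_set_scope.
Local Open Scope ring_scope.

Definition Sigma_class d (T : measurableType d) (I : set (set T)) : Prop :=
  [/\ I `<=` measurable,
      (forall A B, I A -> I B -> A `<=` B \/ B `<=` A),
      I set0, I setT &
      <<s I >> = measurable].

Definition Sigma_nonempty d (T : measurableType d) : Prop :=
  exists I : set (set T), Sigma_class I.

Local Open Scope ereal_scope.
Local Open Scope charge_scope.

Section defs.
Context d (T : measurableType d) (R : realType).
Variables (nu mu : {finite_measure set T -> \bar R}).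

Definition Fmu (y : R) : \bar R := nu [set w | ('d (charge_of_finite_measure mu) '/d nu) w <= y%:E].

(* F_mu^{-1}(beta) = inf {z >= 0 : F_mu(z) > beta}  (inf of empty set = +oo) *)
Definition Fmu_inv (b : R) : \bar R :=
  ereal_inf [set z%:E | z in [set z : R | (0 <= z)%R /\ b%:E < Fmu z]].

Definition vmu (A : set T) : \bar R :=
  \int[lebesgue_measure]_(z in `[0%R, +oo[%classic) mine (nu setT - Fmu z) (nu A).
End defs.

(* Main.v *)
Require Import Defs.
From HB Require Import structures.
From mathcomp Require Import all_boot all_order all_algebra.
From mathcomp Require Import all_classical all_reals all_analysis.
From mathcomp Require Import measurable_realfun.
From mathcomp Require Import lra.
Import Order.TTheory GRing.Theory Num.Theory.
Import numFieldNormedType.Exports.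
Local Open Scope classical_set_scope.
Local Open Scope ring_scope.
Local Open Scope ereal_scope.

Section helpers.
Local Open Scope charge_scope.
Context d (T : measurableType d) (R : realType).
Variables (nu mu : {finite_measure set T -> \bar R}).

Local Notation f := ('d (charge_of_finite_measure mu) '/d nu).

Lemma mf_RN : measurable_fun [set: T] (f : T -> \bar R).
Proof.
have [h|h] := pselect (charge_of_finite_measure mu `<< nu).
  exact: measurable_int (Radon_Nikodym_integrable h).
rewrite /Radon_Nikodym; case: pselect => [h'|_]; first by exfalso.
exact: measurable_cst.
Qed.

Lemma mlev (y : R) : measurable [set w | f w <= y%:E].
Proof.
have := mf_RN measurableT _ (emeasurable_itv `]-oo, y%:E]).
rewrite setTI; congr measurable; apply/seteqP; split => w /=; by rewrite in_itv.
Qed.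

Definition Fr (y : R) : R := fine (Fmu nu mu y).

Lemma FmuE y : Fmu nu mu y = (Fr y)%:E.
Proof. by rewrite /Fr /Fmu fineK // fin_num_measure //; exact: mlev. Qed.

Lemma Fr_ge0 y : (0 <= Fr y)%R.
Proof. by rewrite -lee_fin -FmuE measure_ge0. Qed.

Lemma Fr_leN y : (Fr y <= fine (nu setT))%R.
Proof.
rewrite -lee_fin -FmuE fineK ?fin_num_measure //.
by apply: le_measure; rewrite ?inE //; exact: mlev.
Qed.

Lemma Fr_nd : {homo Fr : x y / (x <= y)%R}.
Proof.
move=> x y xy; rewrite -lee_fin -!FmuE.
apply: le_measure; rewrite ?inE //; try exact: mlev.
by move=> w /= h; rewrite (le_trans h) // lee_fin.
Qed.

Lemma mFr : measurable_fun setT Fr.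
Proof. apply: nondecreasing_measurable => //; exact: Fr_nd. Qed.

Lemma Sb_meas (b : R) : measurable [set z : R | (0 <= z)%R /\ (Fr z <= b)%R].
Proof.
have -> : [set z : R | (0 <= z)%R /\ (Fr z <= b)%R] =
   `[0%R, +oo[ `&` (setT `&` Fr @^-1` `]-oo, b]).
  by apply/seteqP; split => z /=; rewrite !in_itv /= ?andbT; [case=> -> -> | case=> -> [_ ->]].
apply: measurableI => //; exact: mFr.
Qed.

Lemma key (b : R) :
  lebesgue_measure [set z : R | (0 <= z)%R /\ (Fr z <= b)%R] = Fmu_inv nu mu b.
Proof.
set S := [set z : R | _].
have mS : measurable S := Sb_meas b.
set U := [set z : R | (0 <= z)%R /\ (b < Fr z)%R].
have -> : Fmu_inv nu mu b = ereal_inf [set z%:E | z in U].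
  rewrite /Fmu_inv; congr ereal_inf; congr image; apply/seteqP; split => z /=;
  by rewrite FmuE lte_fin.
have [[u0 Uu0]|U0] := pselect (U !=set0); last first.
  have -> : U = set0 by apply/seteqP; split => // z Uz; apply: U0; exists z.
  rewrite image_set0 ereal_inf0.
  have -> : S = `[0%R, +oo[%classic.
    apply/seteqP; split => z /=; rewrite in_itv /= andbT; first by case.
    move=> z0; split => //; rewrite leNgt; apply/negP => bz.
    by apply: U0; exists z.
  by rewrite lebesgue_measure_itv /= ltry.
have lbU : has_lbound U by exists 0%R => z [].
rewrite ereal_inf_EFin //; last by exists u0.
set m := inf U.
have m0 : (0 <= m)%R by apply: lb_le_inf; [exists u0| move=> z []].
have SU : S `<=` `[0%R, m]%classic.
  move=> z [z0 zb]; rewrite /= in_itv /= z0 /= leNgt; apply/negP => mz.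
  have [u [u0' bu] uz] := inf_lt (ex_intro _ u0 Uu0) mz.
  have h : (Fr u <= Fr z)%R by apply: Fr_nd; exact: ltW.
  by have := lt_le_trans bu (le_trans h zb); rewrite ltxx.
have US : `[0%R, m[%classic `<=` S.
  move=> z; rewrite /= in_itv /= => /andP[z0 zm]; split => //.
  rewrite leNgt; apply/negP => bz.
  have : (m <= z)%R by apply: (ge_inf lbU).
  by rewrite leNgt zm.
apply/le_anti/andP; split.
  have h : lebesgue_measure S <= lebesgue_measure `[0%R, m]%classic :=
    (@le_measure _ _ _ lebesgue_measure _ _ (mem_set mS) (mem_set (measurable_itv `[0%R, m])) SU).
  apply: le_trans h _.
  rewrite lebesgue_measure_itv /=; case: ifP => _; last by rewrite lee_fin.
  by rewrite sube0.
have h' : lebesgue_measure `[0%R, m[%classic <= lebesgue_measure S :=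
  (@le_measure _ _ _ lebesgue_measure _ _ (mem_set (measurable_itv `[0%R, m[)) (mem_set mS) US).
apply: le_trans h'.
rewrite lebesgue_measure_itv /=; case: ifP => h; first by rewrite sube0.
by rewrite lee_fin; move: h; rewrite lte_fin => /negbT; rewrite -leNgt.
Qed.
End helpers.
Arguments Fr {d T R} nu mu y.
Arguments mFr {d T R} nu mu.

Theorem proposition15 (d : measure_display) (T : measurableType d) (R : realType)
  (nu mu : {finite_measure set T -> \bar R}) :
  Sigma_nonempty T -> mu `<< nu ->
  forall A : set T, measurable A ->
  vmu nu mu A =
  \int[lebesgue_measure]_(b in `[fine (nu (~` A)), fine (nu setT)]%classic)
     Fmu_inv nu mu b.
Proof.
move=> _ _ A mA.
set N := fine (nu setT); set a := fine (nu A).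
have nuT : nu setT = N%:E by rewrite /N fineK ?fin_num_measure.
have nuA : nu A = a%:E by rewrite /a fineK ?fin_num_measure.
have a0 : (0 <= a)%R by rewrite -lee_fin -nuA measure_ge0.
have aN : (a <= N)%R.
  by rewrite -lee_fin -nuA -nuT; apply: le_measure; rewrite ?inE.
have -> : fine (nu (~` A)) = (N - a)%R.
  rewrite -setTD measureD // ?setTI ?fineB ?fin_num_measure //.
  by rewrite ltey_eq fin_num_measure.
set D : set (R * R) := [set p | (0 <= p.1)%R /\ ((N - a <= p.2)%R /\ (p.2 <= N)%R)
   /\ (Fr nu mu p.1 <= p.2)%R].
have mD : measurable D.
  have -> : D = (`[0%R, +oo[ `*` `[(N - a)%R, N]) `&`
     (setT `&` (fun p : R * R => Fr nu mu p.1 - p.2)%R @^-1` `]-oo, 0%R]).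
    rewrite /D; apply/seteqP; split => -[x y] /=; rewrite !in_itv /= ?andbT subr_le0.
      by case=> x0 [[h1 h2] h3]; rewrite x0 h1 h2 h3.
    by case=> [[x0 /andP[h1 h2]] [_ h3]].
  apply: measurableI; first exact: measurableX.
  apply: (measurable_funB _ measurable_snd) => //.
  exact: measurableT_comp (mFr nu mu) measurable_fst.
have H := indic_fubini_tonelli lebesgue_measure lebesgue_measure mD.
have FE := indic_fubini_tonelli_FE lebesgue_measure mD.
have GE := indic_fubini_tonelli_GE lebesgue_measure mD.
rewrite /vmu integral_mkcond [RHS]integral_mkcond.
apply: (eq_trans _ (eq_trans H _)).
  apply: eq_integral => z _; rewrite patchE.
  transitivity (lebesgue_measure (xsection D z)); last first.
    exact: (esym (congr1 (fun g => g z) FE)).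
  case: ifPn => [/set_mem /= z0|zn].
    move: z0; rewrite in_itv /= andbT => z0.
    have -> : xsection D z = `[Num.max (N - a)%R (Fr nu mu z), N]%classic.
      apply/seteqP; split => y; rewrite /xsection /= in_setE /D /= in_itv /= ge_max.
        by case=> _ [[-> ->] ->].
      by case/andP => /andP[h1 h2] h3.
    rewrite lebesgue_measure_itv /= nuT nuA FmuE -EFinB -EFin_min.
    rewrite lte_fin; case: ifPn => h.
      rewrite -EFinD; congr EFin.
      case: (leP (N - a)%R (Fr nu mu z)) => h1; case: (leP (N - Fr nu mu z)%R a) => h2; lra.
    have F0 := @Fr_ge0 _ _ _ nu mu z; have FN : (Fr nu mu z <= N)%R := @Fr_leN _ _ _ nu mu z.
    congr EFin; move: h; rewrite -leNgt.
    case: (leP (N - a)%R (Fr nu mu z)) => h1; case: (leP (N - Fr nu mu z)%R a) => h2 h3; lra.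
  have -> : xsection D z = set0.
    apply/seteqP; split => y //; rewrite /xsection /= in_setE /D /= => -[z0 _].
    by apply: (negP zn); apply: mem_set; rewrite /= in_itv /= andbT.
  by rewrite measure0.
apply: eq_integral => b _; rewrite patchE /=.
transitivity (lebesgue_measure (ysection D b)).
  exact: (congr1 (fun g => g b) GE).
case: ifPn => [/set_mem /= bI|bn].
  move: bI; rewrite in_itv /= => /andP[b1 b2].
  have -> : ysection D b = [set z | (0 <= z)%R /\ (Fr nu mu z <= b)%R].
    apply/seteqP; split => z; rewrite /ysection /= in_setE /D /=.
      by case=> z0 [_ h].
    by case=> z0 h.
  exact: key.
have -> : ysection D b = set0.
  apply/seteqP; split => z //; rewrite /ysection /= in_setE /D /= => -[_ [[h1 h2] _]].
  by apply: (negP bn); apply: mem_set; rewrite /= in_itv /= h1 h2.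
by rewrite measure0.
Qed.
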